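(* For $n\ge1$ let $\pi_m(n)=\prod_{k=1,\,k\ne m}^{n}\left(1-\frac{m^2}{k^2}\right)$ and $\alpha_m^{(1)}(n)=\frac{1}{m\,\pi_m(n)}$ for $1\le m\le n$. Let $P_{2n}$ be the unique polynomial of degree at most $2n$ interpolating $y(x)=\sin x$ at the points $x=m\pi/2$, $m=-n,\dots,n$. Then $$P_{2n}'(0)=\frac{1}{\pi}\sum_{m=1}^{n}\alpha_m^{(1)}(n)\left(\sin\tfrac{m\pi}{2}-\sin\!\left(-\tfrac{m\pi}{2}\right)\right)=\frac{2}{\pi}\sum_{\substack{0\le j\\ 2j+1\le n}}(-1)^{j}\alpha_{2j+1}^{(1)}(n),$$ and $$\lim_{n\to\infty}P_{2n}'(0)=1=\sin'(0).$$ *)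

(* Defs.v *)
From HB Require Import structures.
From mathcomp Require Import all_boot all_order all_algebra.
From mathcomp Require Import all_classical all_reals all_analysis.
Set Implicit Arguments. Unset Strict Implicit. Unset Printing Implicit Defensive.
Import Order.TTheory GRing.Theory Num.Theory.
Local Open Scope ring_scope.

Definition pim {R : realType} (m n : nat) : R :=
  \prod_(1 <= k < n.+1 | k != m) (1 - (m%:R ^+ 2) / (k%:R ^+ 2)).

Definition alpha1 {R : realType} (m n : nat) : R :=
  1 / (m%:R * pim m n).

Definition node {R : realType} (m : int) : R := (m%:~R * pi) / 2.

Definition interp_sin {R : realType} (n : nat) (P : {poly R}) : Prop :=
  (size P <= (2 * n).+1)%N /\
  forall m : int, - (n%:Z) <= m <= n%:Z -> P.[node m] = sin (node m).

(* Main.v *)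
Require Import Defs.
From HB Require Import structures.
From mathcomp Require Import all_boot all_order all_algebra.
From mathcomp Require Import all_classical all_reals all_analysis.
From mathcomp Require Import ring lra zify.
Import Order.TTheory GRing.Theory Num.Theory numFieldNormedType.Exports.
Local Open Scope classical_set_scope.
Local Open Scope ring_scope.


Lemma lagrange_at (R : fieldType) (r : seq nat) (t : nat -> R) (U : {poly R}) z :
  uniq r -> {in r &, injective t} -> (size U <= size r)%N ->
  U.[z] = \sum_(k <- r) U.[t k] * \prod_(j <- r | j != k) ((z - t j) / (t k - t j)).
Proof.
move=> ur tinj sU.
pose c k := U.[t k] * \prod_(j <- r | j != k) (t k - t j)^-1.
pose L := \sum_(k <- r) c k *: \prod_(j <- r | j != k) ('X - (t j)%:P).
have HL x : L.[x] = \sum_(k <- r) U.[t k] * \prod_(j <- r | j != k) ((x - t j) / (t k - t j)).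
  rewrite /L horner_sum; apply: eq_bigr => k _.
  rewrite hornerZ horner_prod /c -mulrA; congr (_ * _).
  rewrite -big_split /=; apply: eq_bigr => j _; by rewrite hornerXsubC mulrC.
have sL : (size L <= size r)%N.
  apply: (leq_trans (size_sum _ _ _)); apply/bigmax_leqP_seq => k kr _.
  apply: (leq_trans (size_scale_leq _ _)).
  rewrite -big_filter size_prod_XsubC.
  have -> : [seq j <- r | j != k] = rem k r by rewrite rem_filter.
  rewrite size_rem //; case: r kr {ur tinj sU c L HL} => // a s _ /=; exact: leqnn.
suff HU : U = L by rewrite {1}HU HL.
apply/eqP; rewrite -subr_eq0; apply/eqP.
apply: (@roots_geq_poly_eq0 _ _ (map t r)).
- apply/allP => x /mapP [i ir ->]; rewrite rootE hornerD hornerN HL.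
  have h1 : \prod_(j <- r | j != i) ((t i - t j) / (t i - t j)) = 1.
    apply: big1_seq => j /andP [ji jr].
    apply: divff; rewrite subr_eq0; apply/eqP => /tinj.
    by move=> /(_ ir jr) ij; move: ji; rewrite ij eqxx.
  have h2 : \sum_(k <- r | k != i) U.[t k] * \prod_(j <- r | j != k) ((t i - t j) / (t k - t j)) = 0.
    apply: big1_seq => k /andP [ki kr].
    rewrite (big_mkcond (fun j => j != k)) (bigD1_seq i) //= eq_sym ki.
    by rewrite subrr mul0r mul0r mulr0.
  by rewrite (bigD1_seq i) //= h1 h2 addr0 mulr1 subrr.
- by rewrite map_inj_in_uniq.
- rewrite size_map; apply: (leq_trans (size_polyD _ _)).
  by rewrite geq_max sU size_polyN.
Qed.

Lemma pim_neq0 (R : realType) k n : pim k n != 0 :> R.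
Proof.
  rewrite /pim prodf_seq_neq0; apply/allP => j; rewrite mem_index_iota => /andP [j1 _].
  apply/implyP => jk; have j0 : j%:R != 0 :> R by rewrite pnatr_eq0 -lt0n.
  rewrite subr_eq0 eq_sym; apply/negP => /eqP H.
  have : k%:R ^+ 2 = j%:R ^+ 2 :> R.
    by rewrite -[LHS](divfK (expf_neq0 2 j0)) H mul1r.
  by move/eqP; rewrite -!natrX eqr_nat eqn_sqr eq_sym (negbTE jk).
Qed.

Lemma deriv0_formula (R : realType) (n : nat) (h : R) (Q : {poly R}) :
  h != 0 -> (size Q <= (2 * n).+1)%N ->
  Q^`().[0] = \sum_(1 <= m < n.+1)
     (Q.[m%:R * h] - Q.[- (m%:R * h)]) / (2 * m%:R * h * pim m n).
Proof.
move=> h0 sQ.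
pose V := odd_poly Q; pose E := even_poly Q.
have HQ x : Q.[x] = E.[x ^+ 2] + V.[x ^+ 2] * x.
  by rewrite -{1}(poly_even_odd Q) hornerD hornerM !horner_comp hornerXn hornerX.
have H0 : Q^`().[0] = V.[0].
  by rewrite !horner_coef0 coef_deriv /V coef_odd_poly.
have sV : (size V <= size (index_iota 1 n.+1))%N.
  rewrite /index_iota subSS subn0 size_iota.
  apply: (leq_trans (size_odd_poly _)).
  have := half_leq sQ; rewrite mul2n.
  by have -> : ((n.*2).+1)./2 = n by rewrite -[X in _ = X](uphalf_double n).
pose t (k : nat) := (k%:R * h) ^+ 2.
have tinj : {in index_iota 1 n.+1 &, injective t}.
  move=> a b _ _; rewrite /t !exprMn => /(mulIf _).
  rewrite expf_eq0 (negbTE h0) andbF => /(_ isT) /eqP.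
  by rewrite -!natrX eqr_nat eqn_sqr => /eqP.
rewrite H0 (@lagrange_at R _ t V 0 (iota_uniq _ _) tinj sV).
rewrite big_seq [RHS]big_seq; apply: eq_bigr => k.
rewrite mem_index_iota => /andP [k1 kn].
have k0 : k%:R != 0 :> R by rewrite pnatr_eq0 -lt0n.
rewrite !HQ sqrrN.
have -> : \prod_(j <- index_iota 1 n.+1 | j != k) ((0 - t j) / (t k - t j)) = (pim k n)^-1.
  rewrite /pim -prodfV big_seq_cond [RHS]big_seq_cond; apply: eq_bigr => j.
  rewrite mem_index_iota => /andP [/andP [j1 jn] jk].
  have j0 : j%:R != 0 :> R by rewrite pnatr_eq0 -lt0n.
  have jk' : j%:R ^+ 2 - k%:R ^+ 2 != 0 :> R.
    by rewrite subr_eq0 -!natrX eqr_nat eqn_sqr.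
  rewrite /t; field.
  have kj' : k%:R ^+ 2 - j%:R ^+ 2 != 0 :> R.
    by rewrite subr_eq0 -!natrX eqr_nat eqn_sqr eq_sym.
  by rewrite j0 jk' /= !exprMn -mulrBl mulf_neq0 // expf_neq0.
have p0 := @pim_neq0 R k n.
field.
by rewrite p0 h0 k0.
Qed.

Lemma sin_odd (R : realType) (i : nat) :
  sin (((2 * i + 1)%:R * pi) / 2) = (-1) ^+ i :> R.
Proof.
have -> : ((2 * i + 1)%:R * pi) / 2 = pi / 2 + pi *+ i :> R.
  by rewrite -mulr_natr natrD natrM; field.
by rewrite (alternatingn (@sinDpi R)) sin_pihalf mulr1.
Qed.

Lemma sin_even (R : realType) (i : nat) :
  sin (((2 * i)%:R * pi) / 2) = 0 :> R.
Proof.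
have -> : ((2 * i)%:R * pi) / 2 = 0 + pi *+ i :> R.
  by rewrite -mulr_natr natrM; field.
by rewrite (alternatingn (@sinDpi R)) sin0 mulr0.
Qed.

Lemma sum_odd (R : realType) (g : nat -> R) N :
  \sum_(1 <= m < N.+1) g m * sin ((m%:R * pi) / 2) =
  \sum_(0 <= j < N.+1 | (2 * j + 1 <= N)%N) (-1) ^+ j * g (2 * j + 1).
Proof.
elim: N => [|N IH].
  by rewrite big_geq // big1 // => j; rewrite addn1.
rewrite big_nat_recr //= IH.
rewrite [in RHS]big_mkcond big_nat_recr //= ifF; last by apply/negbTE; rewrite -ltnNge; lia.
rewrite addr0 [in X in X + _ = _]big_mkcond.
have -> : \sum_(0 <= i < N.+1) (if (2 * i + 1 <= N.+1)%N then (-1) ^+ i * g (2 * i + 1) else 0) =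
   \sum_(0 <= i < N.+1) (if (2 * i + 1 <= N)%N then (-1) ^+ i * g (2 * i + 1) else 0) +
   \sum_(0 <= i < N.+1) (if (2 * i + 1 == N.+1)%N then (-1) ^+ i * g (2 * i + 1) else 0).
  rewrite -big_split /=; apply: eq_bigr => i _.
  case: (ltngtP (2 * i + 1) N.+1) => H.
  - by rewrite ifT ?ifF ?addr0 //; lia.
  - by rewrite !ifF ?addr0 //; lia.
  - by rewrite ifF ?ifT ?add0r //; lia.
congr (_ + _).
have [i Hi] : exists i, N = (2 * i + (odd N))%N.
  exists N./2; rewrite -{1}(odd_double_half N); lia.
case: (odd N) Hi => /= ->.
- rewrite big1; last by move=> j _; rewrite ifF //; lia.
  have -> : (2 * i + 1).+1 = (2 * (i.+1))%N by lia.
  by rewrite sin_even mulr0.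
- rewrite addn0 (bigD1_seq i) ?mem_index_iota ?iota_uniq //=; last by lia.
  rewrite ifT; last by lia.
  rewrite big1_seq ?addr0; last first.
    by move=> j /andP [ji _]; rewrite ifF //; apply/negbTE; move: ji; apply: contra => /eqP H; apply/eqP; lia.
  by rewrite -addn1 sin_odd mulrC.
Qed.

Lemma part1 (R : realType) n (P : {poly R}) : (1 <= n)%N -> interp_sin n P ->
  P^`().[0] = pi^-1 * \sum_(1 <= m < n.+1)
      alpha1 m n * (sin ((m%:R * pi) / 2) - sin (- ((m%:R * pi) / 2)))
  /\ P^`().[0] = 2 / pi * \sum_(0 <= j < n.+1 | (2 * j + 1 <= n)%N)
                  (-1) ^+ j * alpha1 (2 * j + 1) n.
Proof.
move=> n1 [sP HP].
have pi0 : pi != 0 :> R by rewrite gt_eqF // pi_gt0.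
have h0 : pi / 2 != 0 :> R by rewrite mulf_neq0 // invr_eq0 pnatr_eq0.
have E1 : P^`().[0] = pi^-1 * \sum_(1 <= m < n.+1)
      alpha1 m n * (sin ((m%:R * pi) / 2) - sin (- ((m%:R * pi) / 2))).
  rewrite (@deriv0_formula R n _ P h0 sP) mulr_sumr; apply: eq_big_seq => m.
  rewrite mem_index_iota => /andP [m1 mn].
  have Hp : P.[m%:R * (pi / 2)] = sin ((m%:R * pi) / 2).
    rewrite mulrA; have := HP (m%:Z); rewrite /node => -> //.
    apply/andP; split; lia.
  have Hm : P.[- (m%:R * (pi / 2))] = sin (- ((m%:R * pi) / 2)).
    have := HP (- m%:Z); rewrite /node mulrNz !mulNr mulrA => -> //.
    apply/andP; split; lia.
  have m0 : m%:R != 0 :> R by rewrite pnatr_eq0 -lt0n.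
  have p0 := @pim_neq0 R m n.
  rewrite Hp Hm /alpha1; move: (pi : R) pi0 => p p0'; field.
  by rewrite p0 m0 p0'.
split => //; rewrite E1.
rewrite (eq_bigr (fun m => 2 * (alpha1 m n * sin ((m%:R * pi) / 2)))); last first.
  by move=> m _; rewrite sinN opprK; ring.
rewrite -mulr_sumr (@sum_odd R (fun m => alpha1 m n)); ring.
Qed.

Lemma mono_aux (R : realType) (p : {poly R}) (s : R) :
  (forall x, 0 < x < 1 -> 0 <= p^`().[x] + s * (1 + x ^+ 2)^-1) ->
  p.[0] + s * atan 0 <= p.[1] + s * atan 1.
Proof.
move=> H.
pose F : R -> R := horner p + s *: (@atan R).
have dF (x : R) : is_derive x (1 : R) F (p^`().[x] + s *: (1 + x ^+ 2)^-1).
  apply: is_deriveD; apply: is_deriveZ.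
have Hd : forall x, x \in `]0, 1[ -> derivable F x 1.
  by move=> x _; exact: ex_derive.
have Hge : forall x, x \in `]0, 1[ -> 0 <= (F^`())%classic x.
  move=> x; rewrite in_itv /= => xi.
  by rewrite derive1E derive_val; exact: H.
have Hc : {within `[0, 1], continuous F}.
  by apply: derivable_within_continuous => x _; exact: ex_derive.
have := @ger0_derive1_le_cc R F 0 1 Hd Hge Hc 0 1.
rewrite !in_itv /= lexx ler01 lexx => /(_ isT isT isT).
by rewrite /F /=.
Qed.

Lemma leibniz (R : realType) J :
  `| \sum_(j < J) (-1) ^+ j / (2 * j + 1)%:R - pi / 4 | <= 1 / (2 * J + 1)%:R :> R.
Proof.
pose q : {poly R} := \sum_(j < J) ((-1) ^+ j / (2 * j + 1)%:R) *: 'X^(2 * j + 1).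
pose gp : {poly R} := ((2 * J + 1)%:R)^-1 *: 'X^(2 * J + 1).
have q1 : q.[1] = \sum_(j < J) (-1) ^+ j / (2 * j + 1)%:R.
  by rewrite /q horner_sum; apply: eq_bigr => j _; rewrite hornerZ hornerXn expr1n mulr1.
have q0 : q.[0] = 0.
  by rewrite /q horner_sum big1 // => j _; rewrite hornerZ hornerXn expr0n addn1 mulr0.
have gp1 : gp.[1] = 1 / (2 * J + 1)%:R by rewrite /gp hornerZ hornerXn expr1n mulr1 div1r.
have gp0 : gp.[0] = 0 by rewrite /gp hornerZ hornerXn expr0n addn1 mulr0.
have dq x : q^`().[x] = \sum_(j < J) (- (x ^+ 2)) ^+ j.
  rewrite /q (big_morph _ (@derivD R) (@deriv0 R)) horner_sum; apply: eq_bigr => j _.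
  rewrite derivZ derivXn hornerZ hornerMn hornerXn addn1 /=.
  have j0 : (2 * j).+1%:R != 0 :> R by rewrite pnatr_eq0.
  rewrite [RHS]exprNn exprM -mulr_natr; move: ((-1) ^+ j) ((x ^+ 2) ^+ j) => a b.
  by field.
have dgp x : gp^`().[x] = (x ^+ 2) ^+ J.
  rewrite /gp derivZ derivXn hornerZ hornerMn hornerXn addn1 /= -exprM.
  have j0 : (2 * J + 1)%:R != 0 :> R by rewrite pnatr_eq0 addn1.
  by rewrite -mulr_natr; move: j0; rewrite -addn1 => j0; field.
have geo (x : R) : (1 + x ^+ 2) * \sum_(j < J) (- (x ^+ 2)) ^+ j = 1 - (- (x ^+ 2)) ^+ J.
  have := subrX1 (- (x ^+ 2)) J.
  move: (\sum_(j < J) (- (x ^+ 2)) ^+ j) ((- (x ^+ 2)) ^+ J) => S a H.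
  have -> : 1 + x ^+ 2 = - (- x ^+ 2 - 1) by ring.
  by rewrite mulNr -H; ring.
have pos (x e : R) : `|e| = 1 ->
    0 <= (x ^+ 2) ^+ J + e * ((- (x ^+ 2)) ^+ J / (1 + x ^+ 2)).
  move=> he; have y0 : 0 <= x ^+ 2 by exact: sqr_ge0.
  move: y0; set y := x ^+ 2 => y0.
  have ha : `|(- y) ^+ J| = y ^+ J by rewrite normrX normrN ger0_norm.
  have y1 : 0 < 1 + y by lra.
  set t := e * _.
  have ht : `|t| <= y ^+ J.
    rewrite /t normrM he mul1r normrM normfV (gtr0_norm y1) ler_pdivrMr // ha.
    have := exprn_ge0 J y0; move: (y ^+ J) => b b0; nra.
  have hn : - t <= `|t| by rewrite ler_normr lexx orbT.
  lra.
have y1 (x : R) : 1 + x ^+ 2 != 0.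
  by rewrite gt_eqF // ltr_pwDl // sqr_ge0.
have hS (x : R) : \sum_(j < J) (- (x ^+ 2)) ^+ j = (1 - (- (x ^+ 2)) ^+ J) / (1 + x ^+ 2).
  by apply: (mulfI (y1 x)); rewrite geo mulrC divfK.
have F1 := @mono_aux R (gp + q) (-1).
have F2 := @mono_aux R (gp - q) 1.
rewrite !hornerD ?hornerN gp0 q0 gp1 q1 atan0 atan1 in F1.
rewrite !hornerD ?hornerN gp0 q0 gp1 q1 atan0 atan1 in F2.
have G1 : 0 <= 1 / (2 * J + 1)%:R + \sum_(j < J) (-1) ^+ j / (2 * j + 1)%:R - (pi : R) / 4.
  have H1 : forall x : R, 0 < x < 1 -> 0 <= (gp + q)^`().[x] + -1 * (1 + x ^+ 2)^-1.
    move=> x _; rewrite derivD hornerD dgp dq hS.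
    have := pos x (-1) (normrN1 _).
    move: ((- (x ^+ 2)) ^+ J) (y1 x) => a hy H.
    suff -> : (x ^+ 2) ^+ J + (1 - a) / (1 + x ^+ 2) + -1 * (1 + x ^+ 2)^-1 =
       (x ^+ 2) ^+ J + -1 * (a / (1 + x ^+ 2)) by [].
    by field.
  have := F1 H1; rewrite mulr0 !addr0 => H. lra.
have G2 : 0 <= 1 / (2 * J + 1)%:R - \sum_(j < J) (-1) ^+ j / (2 * j + 1)%:R + (pi : R) / 4.
  have H2 : forall x : R, 0 < x < 1 -> 0 <= (gp - q)^`().[x] + 1 * (1 + x ^+ 2)^-1.
    move=> x _; rewrite derivB hornerD hornerN dgp dq hS.
    have := pos x 1 (normr1 _).
    move: ((- (x ^+ 2)) ^+ J) (y1 x) => a hy H.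
    suff -> : (x ^+ 2) ^+ J - (1 - a) / (1 + x ^+ 2) + 1 * (1 + x ^+ 2)^-1 =
       (x ^+ 2) ^+ J + 1 * (a / (1 + x ^+ 2)) by [].
    by field.
  have := F2 H2; rewrite mulr0 !addr0 ?oppr0 ?addr0 => H; lra.
rewrite ler_distl; apply/andP; split; lra.
Qed.

Fixpoint cc {R : realType} (n m : nat) : R :=
  if m is m'.+1 then cc n m' * ((n%:R - m'%:R) / (n%:R + m'%:R + 1)) else 1.

Lemma cc_gt (R : realType) n m : (n < m)%N -> cc n m = 0 :> R.
Proof.
elim: m => // m IH; rewrite ltnS leq_eqVlt => /orP [/eqP ->|nm] /=.
  by rewrite subrr mul0r mulr0.
by rewrite IH // mul0r.
Qed.

Lemma cc_fac_bnd (R : realType) n m : (m < n)%N ->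
  0 <= (n%:R - m%:R) / (n%:R + m%:R + 1) :> R /\ (n%:R - m%:R) / (n%:R + m%:R + 1) <= 1 :> R.
Proof.
move=> mn; have hp : 0 < n%:R + m%:R + 1 :> R by rewrite ltr_wpDl // addr_ge0.
split.
  by rewrite divr_ge0 ?(ltW hp) // subr_ge0 ler_nat ltnW.
rewrite ler_pdivrMr // mul1r.
have : 0 <= m%:R :> R by [].
move: (n%:R : R) (m%:R : R) => a b hb; lra.
Qed.

Lemma cc_bnd (R : realType) n m : 0 <= (cc n m : R) <= 1.
Proof.
elim: m => [|m IH] /=; first by rewrite ler01 lexx.
case: (ltnP m n) => mn; last first.
  by rewrite -/(cc n m.+1) cc_gt // lexx ler01.
have [h1 h2] := @cc_fac_bnd R n m mn.
move: IH h1 h2; move: (cc n m) ((n%:R - m%:R) / (n%:R + m%:R + 1)) => a b.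
move=> /andP [a0 a1] b0 b1; apply/andP; split; [exact: mulr_ge0 | exact: mulr_ile1].
Qed.

Lemma cc_decr (R : realType) n m : cc n m.+1 <= cc n m :> R.
Proof.
have /andP [a0 a1] := cc_bnd R n m.
case: (ltnP m n) => mn; last by rewrite cc_gt.
have [h1 h2] := @cc_fac_bnd R n m mn.
by rewrite /= -/(cc n m) ler_piMr.
Qed.

Lemma one_sub_cc (R : realType) n m : 1 - cc n m <= (m ^ 2)%:R / (n.+1)%:R :> R.
Proof.
elim: m => [|m IH]; first by rewrite /= subrr mul0r.
have hn : 0 < (n.+1)%:R :> R by rewrite ltr0n.
have hp : 0 < n%:R + m%:R + 1 :> R by rewrite ltr_wpDl // addr_ge0.
have hd : cc n m - cc n m.+1 <= (2 * m + 1)%:R / (n.+1)%:R :> R.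
  have -> : cc n m - cc n m.+1 = cc n m * ((2 * m + 1)%:R / (n%:R + m%:R + 1)) :> R.
    rewrite /= -/(cc n m) natrD natrM; field.
    by rewrite gt_eqF.
  have /andP [a0 a1] := cc_bnd R n m.
  apply: (le_trans (y := (2 * m + 1)%:R / (n%:R + m%:R + 1))).
    by rewrite ler_piMl // divr_ge0 // ltW.
  apply: ler_wpM2l => //; rewrite lef_pV2 ?posrE //.
  by rewrite -natr1 lerD2r lerDl.
have -> : (m.+1 ^ 2)%:R / (n.+1)%:R = (m ^ 2)%:R / (n.+1)%:R + (2 * m + 1)%:R / (n.+1)%:R :> R.
  rewrite -mulrDl -natrD; congr (_%:R / _); lia.
move: IH hd; move: (cc n m) (cc n m.+1) ((m ^ 2)%:R / (n.+1)%:R) ((2 * m + 1)%:R / (n.+1)%:R) => a b c d; lra.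
Qed.

Lemma cc_rec_n (R : realType) n m :
  cc n.+1 m * ((n.+1%:R - m%:R) * (n.+1%:R + m%:R)) = cc n m * (n.+1%:R) ^+ 2 :> R.
Proof.
elim: m => [|m IH]; first by rewrite /= subr0 addr0 mul1r.
have hN : n.+1%:R != 0 :> R by rewrite pnatr_eq0.
have hb : cc n m = cc n.+1 m * ((n.+1%:R - m%:R) * (n.+1%:R + m%:R)) / n.+1%:R ^+ 2 :> R.
  by rewrite IH mulfK // expf_neq0.
rewrite /= -/(cc n.+1 m) -/(cc n m) hb.
have h1 : n%:R + m%:R + 1 != 0 :> R by rewrite gt_eqF // ltr_wpDl // addr_ge0.
have h2 : n.+1%:R + m%:R + 1 != 0 :> R by rewrite gt_eqF // ltr_wpDl // addr_ge0.
move: hN h1 h2; rewrite -!natr1.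
move: (cc n.+1 m) (n%:R : R) (m%:R : R) => a x y hN h1 h2.
field.
by rewrite hN h1 h2.
Qed.

Lemma ccF (R : realType) m e :
  cc (m + e) m * (e`!)%:R * ((2 * m + e)`!)%:R = ((m + e)`!)%:R ^+ 2 :> R.
Proof.
elim: m e => [|m IH] e.
  by rewrite /= mul1r expr2.
have := IH e.+1; rewrite -addSnnS (factS e).
have -> : (2 * m.+1 + e = (2 * m + e.+1).+1)%N by lia.
rewrite factS /= -/(cc (m.+1 + e) m).
move: (cc (m.+1 + e) m) ((2 * m + e.+1)`!) (e`!) ((m.+1 + e)`!) => A Y X Z.
move=> H; rewrite -H.
have hnum : (m.+1 + e)%:R - m%:R = e.+1%:R :> R.
  by rewrite addSn -natr1 natrD; ring.
have hden : (m.+1 + e)%:R + m%:R + 1 = ((2 * m + e.+1).+1)%:R :> R.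
  rewrite -[in RHS]natr1; congr (_ + 1); rewrite -!natrD; apply/eqP; rewrite eqr_nat; apply/eqP; lia.
rewrite hnum hden !natrM.
have h : (2 * m + e.+1).+1%:R != 0 :> R by rewrite pnatr_eq0.
move: h; move: ((2 * m + e.+1).+1%:R : R) => k hk.
by field.
Qed.

Definition Qp {R : realType} (M n : nat) : R :=
  \prod_(1 <= k < n.+1) (1 - M%:R ^+ 2 / k%:R ^+ 2).

Lemma QF (R : realType) n d :
  Qp (n + d + 1) n * ((n`!)%:R ^+ 2) * (d`!)%:R * ((n + d + 1)`!)%:R
  = (-1) ^+ n * ((n + d)`!)%:R * ((2 * n + d + 1)`!)%:R :> R.
Proof.
elim: n d => [|n IH] d.
  rewrite /Qp big_geq // fact0 !add0n; ring.

have := IH d.+1.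
have e1 : (n.+1 + d + 1 = n + d.+1 + 1)%N by lia.
have e2 : (n.+1 + d = n + d.+1)%N by lia.
have e3 : (2 * n.+1 + d + 1 = (2 * n + d.+1 + 1).+1)%N by lia.
rewrite e1 e2 e3 (factS d) (factS n) (factS (2 * n + d.+1 + 1)) !natrM.
rewrite {2}/Qp big_nat_recr //= -/(Qp (n + d.+1 + 1) n).
have ha : (n`!%:R : R) != 0 by rewrite pnatr_eq0 -lt0n fact_gt0.
have hb : (d`!%:R : R) != 0 by rewrite pnatr_eq0 -lt0n fact_gt0.
have hc : ((n + d.+1 + 1)`!%:R : R) != 0 by rewrite pnatr_eq0 -lt0n fact_gt0.
move: ha hb hc.
move: (Qp (n + d.+1 + 1) n) (n`!%:R : R) (d`!%:R : R) ((n + d.+1 + 1)`!%:R : R)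
  ((n + d.+1)`!%:R : R) ((2 * n + d.+1 + 1)`!%:R : R) => Q a b c u v ha hb hc.
rewrite [(-1) ^+ n.+1]exprS.
have hM : (n + d.+1 + 1)%:R = n%:R + d%:R + 2 :> R.
  by rewrite !natrD -natr1 /=; ring.
have hK : (2 * n + d.+1 + 1).+1%:R = 2 * n%:R + d%:R + 3 :> R.
  by rewrite -natr1 !natrD -natr1; ring.
rewrite hM hK -!natr1.
have hy : (d%:R : R) + 1 != 0 by rewrite natr1 pnatr_eq0.
have hx : (n%:R : R) + 1 != 0 by rewrite natr1 pnatr_eq0.
move: hx hy; move: (n%:R : R) (d%:R : R) ((-1) ^+ n : R) => x y s hx hy H.
have hQ : Q = s * u * v / (a * a ^+ 1 * ((y + 1) * b) * c).
  by rewrite -H; field; rewrite ha hy hb hc.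
rewrite hQ; field.
by rewrite hx hc hb hy ha.
Qed.

Lemma pimS (R : realType) m n : m != n.+1 ->
  pim m n.+1 = pim m n * (1 - m%:R ^+ 2 / n.+1%:R ^+ 2) :> R.
Proof.
move=> mn; rewrite /pim (big_mkcond (fun k => k != m)) big_nat_recr //= eq_sym mn.
by rewrite -big_mkcond.
Qed.

Lemma pim_cc (R : realType) m e : (1 <= m)%N ->
  2 * pim m (m + e) * cc (m + e) m = (-1) ^+ m.-1 :> R.
Proof.
case: m => // m _ /=.
elim: e => [|e IH].
  have hQ := @QF R m 0; have hc := @ccF R m.+1 0.
  rewrite !addn0 in hQ hc *.
  have -> : pim m.+1 m.+1 = Qp m.+1 m :> R.
    rewrite /pim /Qp (big_mkcond (fun k => k != m.+1)) big_nat_recr //= eqxx mulr1.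
    apply: eq_big_nat => k /andP [_ km]; rewrite ifT //; lia.
  have e3 : (2 * m.+1 = (2 * m).+2)%N by lia.
  rewrite !addn1 in hQ; rewrite e3 in hc; rewrite -/(cc m.+1 m.+1).
  rewrite fact0 (factS m) [(m.+1 * _)%:R]natrM in hQ.
  rewrite fact0 [(m.+1)`!]factS [((2 * m).+2)`!]factS [(m.+1 * _)%:R]natrM [((2 * m).+2 * _)%:R]natrM in hc.
  have ha : (m`!%:R : R) != 0 by rewrite pnatr_eq0 -lt0n fact_gt0.
  have hb : (((2 * m).+1)`!%:R : R) != 0 by rewrite pnatr_eq0 -lt0n fact_gt0.
  have hm : (m.+1%:R : R) != 0 by rewrite pnatr_eq0.
  have hm2 : ((2 * m).+2%:R : R) != 0 by rewrite pnatr_eq0.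
  have h2 : ((2 * m).+2%:R : R) = 2 * m.+1%:R.
    by rewrite -natrM; congr (_%:R); lia.
  move: hQ hc ha hb hm hm2 h2.
  move: (Qp m.+1 m : R) (cc m.+1 m.+1 : R) (m`!%:R : R) (((2 * m).+1)`!%:R : R)
     (m.+1%:R : R) ((2 * m).+2%:R : R) ((-1) ^+ m : R) => Q c a b x y s.
  move=> hQ hc ha hb hm hm2 h2.
  have eQ : Q = s * a * b / (a ^+ 2 * (x * a)).
    by rewrite -hQ; field; rewrite ha hm.
  have ec : c = (x * a) ^+ 2 / (y * b).
    by rewrite -hc; field; rewrite hm2 hb.
  rewrite eQ ec h2; field.
  by rewrite ha hm hb.
rewrite -/(cc (m.+1 + e.+1) m.+1) addnS pimS; last by apply/eqP; lia.
have hr := @cc_rec_n R (m.+1 + e) m.+1.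
have hd : ((m.+1 + e).+1%:R - m.+1%:R : R) != 0.
  by rewrite subr_eq0 eqr_nat; apply/eqP; lia.
have hs : ((m.+1 + e).+1%:R + m.+1%:R : R) != 0.
  by rewrite -natrD pnatr_eq0.
have hN : ((m.+1 + e).+1%:R : R) != 0 by rewrite pnatr_eq0.
rewrite -/(cc (m.+1 + e) m.+1) in IH.
move: IH hr hd hs hN.
move: (pim m.+1 (m.+1 + e) : R) (cc (m.+1 + e).+1 m.+1 : R) (cc (m.+1 + e) m.+1 : R)
  ((m.+1 + e).+1%:R : R) (m.+1%:R : R) => p c' c N M IH hr hd hs hN.
have ec : c' = c * N ^+ 2 / ((N - M) * (N + M)).
  by rewrite -hr; field; rewrite hd hs.
rewrite ec -IH; field.
by rewrite hd hs hN.
Qed.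

Lemma alt_bound (R : realType) (b : nat -> R) :
  (forall j, 0 <= b j.+1 <= b j) ->
  forall N J, 0 <= \sum_(i < N) (-1) ^+ i * b (J + i)%N <= b J.
Proof.
move=> hb; elim=> [|N IH] J.
  by rewrite big_ord0 lexx /=; have /andP [h h'] := hb J; exact: le_trans h h'.
rewrite big_ord_recl /= expr0 mul1r addn0.
have -> : \sum_(i < N) (-1) ^+ (bump 0 i) * b (J + bump 0 i)%N =
          - \sum_(i < N) (-1) ^+ i * b (J.+1 + i)%N.
  rewrite -sumrN; apply: eq_bigr => i _.
  by rewrite /bump /= add1n exprS mulN1r mulNr addnS addSn.
have /andP [h1 h2] := IH J.+1; have /andP [h3 h4] := hb J.
apply/andP; split; lra.
Qed.

Lemma alt_tail (R : realType) (b : nat -> R) :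
  (forall j, 0 <= b j.+1 <= b j) ->
  forall J K, `|\sum_(J <= j < K) (-1) ^+ j * b j| <= b J.
Proof.
move=> hb J K.
rewrite -{1}[J]add0n big_addn big_mkord.
have -> : \sum_(i < K - J) (-1) ^+ (i + J) * b (i + J)%N =
    (-1) ^+ J * \sum_(i < K - J) (-1) ^+ i * b (J + i)%N.
  rewrite mulr_sumr; apply: eq_bigr => i _.
  by rewrite exprD mulrA [(-1) ^+ J * _]mulrC addnC.
have /andP [h1 h2] := @alt_bound R b hb (K - J) J.
by rewrite normrM normrX normrN1 expr1n mul1r ger0_norm.
Qed.

Lemma alpha_odd (R : realType) j n : (2 * j + 1 <= n)%N ->
  alpha1 (2 * j + 1) n = 2 * cc n (2 * j + 1) / (2 * j + 1)%:R :> R.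
Proof.
move=> hn.
have H := @pim_cc R (2 * j + 1) (n - (2 * j + 1)) (leq_addl _ _).
rewrite subnKC // in H.
have e : (-1) ^+ (2 * j + 1).-1 = 1 :> R by rewrite addn1 /= exprM sqrrN expr1n expr1n.
rewrite e in H.
have p0 := @pim_neq0 R (2 * j + 1) n.
have m0 : (2 * j + 1)%:R != 0 :> R by rewrite pnatr_eq0 addn1.
have ec : cc n (2 * j + 1) = (2 * pim (2 * j + 1) n)^-1 :> R.
  have h2p : 2 * pim (2 * j + 1) n != 0 :> R by rewrite mulf_neq0 // pnatr_eq0.
  by apply: (mulfI h2p); rewrite mulfV // mulrA H.
rewrite /alpha1 ec; field.
have m0' : 2 * j%:R + 1 != 0 :> R by move: m0; rewrite natrD natrM.
by rewrite m0' p0.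
Qed.

Lemma deriv_eq (R : realType) n (P : {poly R}) : (1 <= n)%N -> interp_sin n P ->
  P^`().[0] = 4 / pi * \sum_(0 <= j < n.+1) (-1) ^+ j * (cc n (2 * j + 1) / (2 * j + 1)%:R).
Proof.
move=> n1 HP; have [_ ->] := @part1 R n P n1 HP.
rewrite big_mkcond /= !mulr_sumr; apply: eq_bigr => j _.
case: ifP => hj.
  by rewrite alpha_odd //; ring.
rewrite cc_gt ?mul0r ?mulr0 //; lia.
Qed.

Lemma b_dec (R : realType) n j :
  0 <= (cc n (2 * j.+1 + 1) / (2 * j.+1 + 1)%:R : R) <= cc n (2 * j + 1) / (2 * j + 1)%:R.
Proof.
have /andP [c0 _] := cc_bnd R n (2 * j.+1 + 1).
apply/andP; split; first by rewrite divr_ge0.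
apply: ler_pM => //.
- have -> : (2 * j.+1 + 1 = (2 * j + 1).+2)%N by lia.
  exact: le_trans (cc_decr _ _ _) (cc_decr _ _ _).
- rewrite lef_pV2 ?posrE ?ltr0n ?addn1 // ler_nat; lia.
Qed.

Lemma head_bound (R : realType) n J :
  `| \sum_(j < J) (-1) ^+ j * (cc n (2 * j + 1) / (2 * j + 1)%:R) -
     \sum_(j < J) (-1) ^+ j / (2 * j + 1)%:R | <= (2 * J ^ 2)%:R / n.+1%:R :> R.
Proof.
rewrite -sumrB.
apply: (le_trans (ler_norm_sum _ _ _)).
apply: (le_trans (y := \sum_(j < J) ((2 * J)%:R / n.+1%:R : R))).
  apply: ler_sum => j _.
  have m0 : 0 < (2 * j + 1)%:R :> R by rewrite ltr0n addn1.
  have h1 := one_sub_cc R n (2 * j + 1).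
  have /andP [c0 c1] := cc_bnd R n (2 * j + 1).
  have -> : (-1) ^+ j * (cc n (2 * j + 1) / (2 * j + 1)%:R) - (-1) ^+ j / (2 * j + 1)%:R =
            (-1) ^+ j * ((cc n (2 * j + 1) - 1) / (2 * j + 1)%:R) :> R.
    by rewrite mulrBl mul1r mulrBr.
  rewrite normrM normrX normrN1 expr1n mul1r normrM [`|_^-1|]ger0_norm; last by rewrite invr_ge0 ltW.
  rewrite distrC ger0_norm ?subr_ge0 //.
  rewrite ler_pdivrMr // mulrAC ler_pdivlMr ?ltr0n //.
  rewrite ler_pdivlMr ?ltr0n // in h1.
  apply: (le_trans h1).
  rewrite -!natrM ler_nat; have := ltn_ord j; move: (nat_of_ord j) => k hk; nia.
rewrite sumr_const card_ord -[_ *+ J]mulr_natr mulrAC -natrM; apply: ler_wpM2r; first by rewrite invr_ge0.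
by rewrite ler_nat; lia.
Qed.

Lemma est (R : realType) n J : (J <= n.+1)%N ->
  `| \sum_(0 <= j < n.+1) (-1) ^+ j * (cc n (2 * j + 1) / (2 * j + 1)%:R) - pi / 4 |
    <= 2 / (2 * J + 1)%:R + (2 * J ^ 2)%:R / n.+1%:R :> R.
Proof.
move=> Jn.
rewrite (big_cat_nat _ (n := J)) //= big_mkord.
have h1 := head_bound R n J.
have h3 := leibniz R J.
have h2 := @alt_tail R (fun j => cc n (2 * j + 1) / (2 * j + 1)%:R) (@b_dec R n) J n.+1.
have h4 : cc n (2 * J + 1) / (2 * J + 1)%:R <= 1 / (2 * J + 1)%:R :> R.
  have /andP [_ c1] := cc_bnd R n (2 * J + 1).
  by apply: ler_wpM2r => //; rewrite invr_ge0.
move: h1 h2 h3 h4.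
move: (\sum_(j < J) (-1) ^+ j * (cc n (2 * j + 1) / (2 * j + 1)%:R) : R)
  (\sum_(J <= j < n.+1) (-1) ^+ j * (cc n (2 * j + 1) / (2 * j + 1)%:R) : R)
  (\sum_(j < J) (-1) ^+ j / (2 * j + 1)%:R : R)
  (cc n (2 * J + 1) / (2 * J + 1)%:R : R) => H T L b.
rewrite (_ : 2 / (2 * J + 1)%:R = 1 / (2 * J + 1)%:R + 1 / (2 * J + 1)%:R :> R); last by ring.
move: ((2 * J ^ 2)%:R / n.+1%:R : R) (1 / (2 * J + 1)%:R : R) ((pi : R) / 4) => a e p.
rewrite !ler_norml => /andP [? ?] /andP [? ?] /andP [? ?] ?.
apply/andP; split; lra.
Qed.

Lemma lim_part (R : realType) (P : nat -> {poly R}) :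
  (forall n, (1 <= n)%N -> interp_sin n (P n)) ->
  (fun n : nat => (P n)^`().[0]) @ \oo --> (1 : R).
Proof.
move=> HP; apply/cvgrPdist_le => eps e0.
have pi0 : (0 : R) < pi := @pi_gt0 R.
pose c : R := 16 / (pi * eps).
have c0 : 0 <= c by rewrite /c divr_ge0 // ltW // mulr_gt0.
pose J := Num.bound c.
have cJ : c < J%:R := archi_boundP c0.
have J1 : (1 <= J)%N.
  by rewrite lt0n; apply/negP => /eqP J0; move: cJ; rewrite J0 ltNge c0.
pose c' : R := 16 * (J ^ 2)%:R / (pi * eps).
have c'0 : 0 <= c' by rewrite /c' divr_ge0 // ?ltW ?mulr_gt0 // mulr_ge0.
pose N := Num.bound c'.
have cN : c' < N%:R := archi_boundP c'0.
exists (maxn N J) => // n /= Hn.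
have nJ : (J <= n)%N by move: Hn; rewrite geq_max => /andP [].
have nN : (N <= n)%N by move: Hn; rewrite geq_max => /andP [].
have n1 : (1 <= n)%N by apply: leq_trans J1 nJ.
rewrite (@deriv_eq R n (P n) n1 (HP n n1)).
have E := @est R n J (leq_trans nJ (leqnSn n)).
move: E; set A := \sum_(0 <= j < n.+1) _ => E.
have -> : 1 - 4 / pi * A = 4 / pi * (pi / 4 - A).
  by move: (pi : R) pi0 => p p0; field; exact: lt0r_neq0.
rewrite normrM (ger0_norm (divr_ge0 _ (ltW pi0))) // distrC.
have t1 : 4 / pi * (2 / (2 * J + 1)%:R) <= eps / 2.
  have -> : 4 / pi * (2 / (2 * J + 1)%:R) = eps / 2 * (c / (2 * J + 1)%:R).
    rewrite /c; move: (pi : R) pi0 => p p0; field.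
    by rewrite (lt0r_neq0 e0) (lt0r_neq0 p0) !andbT gt_eqF // ltr_wpDl // mulr_ge0.
  apply: ler_piMr; first by rewrite divr_ge0 // ltW.
  rewrite ler_pdivrMr ?ltr0n ?addn1 // mul1r.
  apply: (le_trans (ltW cJ)); rewrite ler_nat; lia.
have t2 : 4 / pi * ((2 * J ^ 2)%:R / n.+1%:R) <= eps / 2.
  have -> : 4 / pi * ((2 * J ^ 2)%:R / n.+1%:R) = eps / 2 * (c' / n.+1%:R).
    rewrite /c' natrM; move: (pi : R) pi0 => p p0; field.
    by rewrite (lt0r_neq0 e0) (lt0r_neq0 p0) !andbT addrC natr1 pnatr_eq0.
  apply: ler_piMr; first by rewrite divr_ge0 // ltW.
  rewrite ler_pdivrMr ?ltr0n // mul1r.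
  apply: (le_trans (ltW cN)); rewrite ler_nat; lia.
have K0 : 0 <= 4 / pi :> R by rewrite divr_ge0 // ltW.
have := ler_wpM2l K0 E; rewrite mulrDr => H.
move: t1 t2 H; move: (4 / pi * (2 / (2 * J + 1)%:R)) (4 / pi * ((2 * J ^ 2)%:R / n.+1%:R)) => u v.
move: (4 / pi * `|A - pi / 4|) => w; lra.
Qed.


Theorem mainTheorem7 (R : realType) :
  (forall (n : nat) (P : {poly R}), (1 <= n)%N -> interp_sin n P ->
     P^`().[0] =
       pi^-1 * \sum_(1 <= m < n.+1)
                 alpha1 m n * (sin ((m%:R * pi) / 2) - sin (- ((m%:R * pi) / 2)))
     /\ P^`().[0] =
       2 / pi * \sum_(0 <= j < n.+1 | (2 * j + 1 <= n)%N)
                  (-1) ^+ j * alpha1 (2 * j + 1) n)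
  /\
  (forall P : nat -> {poly R}, (forall n, (1 <= n)%N -> interp_sin n (P n)) ->
     ((fun n : nat => (P n)^`().[0]) @ \oo --> (1 : R))
     /\ (1 : R) = derive1 (@sin R) 0).
Proof.
split.
  by move=> n P n1 HP; exact: (@part1 R n P n1 HP).
move=> P HP; split; first exact: (@lim_part R P HP).
by rewrite derive1E derive_val cos0.
Qed.
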